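(* Let $n,k$ be integers with $2\le 2k\le n-4$, let $\lambda\in\overline{\mathcal{U}}_{T_{n,n-2k}}$, and let $Y=\mathrm{KN}(S_\lambda)$ with hook lengths $h_{i,j}$. Then $h_{i,1}=h_{1,i}$ for every $1\le i\le n-2$.
   Context: A partition of $N$ into distinct parts is a sequence $\lambda=(\lambda_1<\dots<\lambda_t)$ of positive integers with sum $N$ and $t\ge 2$, identified with its set of parts. Missing parts: $\mathcal{M}_\lambda=\{1,\dots,\lambda_t\}\setminus\lambda$. $\lambda$ is refinable if two distinct missing parts sum to a part of $\lambda$, unrefinable otherwise; $\mathcal{U}_N$ is the set of unrefinable partitions of $N$. An element of $\mathcal{U}_N$ is maximal if its largest part is the maximum of the largest parts of elements of $\mathcal{U}_N$; $\widetilde{\mathcal{U}}_N$ is the set of these and $\overline{\mathcal{U}}_N=\{\lambda\in\widetilde{\mathcal{U}}_N:\#\mathcal{M}_\lambda=\lfloor\lambda_t/2\rfloor\}$. $T_n=n(n+1)/2$, $T_{n,d}=T_n-d$. For $\lambda\in\overline{\mathcal{U}}_{T_{n,n-2k}}$ with $2\le 2k\le n-4$ one knows $\lambda_t=2n-5$ and $t=n-2$. $S_\lambda=\mathbb{N}_0\setminus\lambda$. The Keith–Nath transformation sends a set $S\subseteq\mathbb{N}_0$ with $0\in S$ and finite complement to the Young diagram $\mathrm{KN}(S)$ whose boundary is the lattice path that, starting at the origin, takes for $j=0,1,\dots,\max(\mathbb{N}_0\setminus S)$ an east step if $j\in S$ and a north step otherwise. Diagrams are in English convention; $h_{i,j}$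 is the hook length of the cell in row $i$ (from the top) and column $j$ (from the left): (cells to its right in its row) + (cells below it in its column) + 1. *)

(* Defs.v *)
From mathcomp Require Import all_boot.
Set Implicit Arguments. Unset Strict Implicit. Unset Printing Implicit Defensive.

Definition T (n : nat) : nat := (n * n.+1)./2.
Definition Tnd (n d : nat) : nat := T n - d.

(* A partition into distinct parts, identified with its set of parts, is
   represented by the strictly increasing sequence lam = [:: l_1; ...; l_t]
   of its (positive) parts. *)
Definition is_dpart (N : nat) (lam : seq nat) : bool :=
  [&& sorted ltn lam, all (fun x => 0 < x) lam, sumn lam == N & 1 < size lam].

Definition largest (lam : seq nat) : nat := last 0 lam.

Definition missing (lam : seq nat) : seq nat :=
  [seq m <- iota 1 (largest lam) | m \notin lam].

Definition refinable (lam : seq nat) : bool :=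
  has (fun a => has (fun b => (a != b) && (a + b \in lam)) (missing lam))
      (missing lam).

Definition unrefinable (N : nat) (lam : seq nat) : bool :=
  is_dpart N lam && ~~ refinable lam.

Definition maximal_unref (N : nat) (lam : seq nat) : Prop :=
  unrefinable N lam /\
  (forall mu : seq nat, unrefinable N mu -> largest mu <= largest lam).

Definition Ubar (N : nat) (lam : seq nat) : Prop :=
  maximal_unref N lam /\ size (missing lam) = (largest lam)./2.

Definition S_of (lam : seq nat) : pred nat := fun j => j \notin lam.

(* Keith--Nath transformation.  For S with 0 \in S and m = max (N_0 \ S),
   the boundary lattice path: for j = 0..m, east step (true) if j \in S,
   north step (false) otherwise. *)
Definition KN_path (S : pred nat) (m : nat) : seq bool :=
  [seq S j | j <- iota 0 m.+1].

(* For each north step (from the bottom), the number of east steps preceding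
   it: this is the length of the row of the Young diagram lying to the
   left of that north step (the diagram is the region north-west of the path,
   between the vertical axis and the path). *)
Fixpoint north_positions (p : seq bool) (e : nat) : seq nat :=
  match p with
  | [::] => [::]
  | b :: p' => if b then north_positions p' e.+1 else e :: north_positions p' e
  end.

(* KN(S) as its sequence of row lengths, rows listed from the top
   (English convention). *)
Definition KN (S : pred nat) (m : nat) : seq nat :=
  rev (north_positions (KN_path S m) 0).

(* Hook length of cell (i, j) (1-indexed: row i from the top, column j from
   the left) of the Young diagram with row lengths Y (top to bottom):
   arm (cells to the right) + leg (cells below) + 1. *)
Definition hook (Y : seq nat) (i j : nat) : nat :=
  (nth 0 Y i.-1 - j) + count (fun r => j <= r) (drop i Y) + 1.

(* Main.v *)
Require Import Defs.
From mathcomp Require Import all_boot.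
From mathcomp Require Import zify.
Set Implicit Arguments. Unset Strict Implicit. Unset Printing Implicit Defensive.

Ltac cleanup := repeat match goal with
 | H : is_true (sorted _ _) |- _ => clear H
 | H : is_true (path _ _ _) |- _ => clear H
 | H : is_true (uniq _) |- _ => clear H
 | H : is_true (all _ _) |- _ => clear H
 | H : is_true (~~ refinable _) |- _ => clear H
 | H : is_true (_ \in _) |- _ => clear H
 | H : is_true (_ \notin _) |- _ => clear H
 | H : is_true (_ != [::]) |- _ => clear H
 | H : is_true (perm_eq _ _) |- _ => clear H
 | H : @eq (seq _) _ _ |- _ => clear H
 | H : @eq bool _ _ |- _ => clear H
 end.
Ltac slia := cleanup; lia.
Ltac snia := cleanup; nia.

Lemma count_prefix (p : pred nat) a b : a <= b ->
  count p (iota 0 a) = count (fun w => (w < a) && p w) (iota 0 b).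
Proof.
move=> Hab; rewrite -(subnKC Hab) iotaD count_cat add0n.
rewrite (@eq_in_count _ (fun w => (w < a) && p w) p); last first.
  by move=> w; rewrite mem_iota /= => ->.
rewrite (@eq_in_count _ (fun w => (w < a) && p w) pred0 (iota a _)); last first.
  by move=> w; rewrite mem_iota => /andP[H _]; rewrite ltnNge H.
by rewrite count_pred0 addn0.
Qed.

Lemma count_suffix (p : pred nat) a b : a <= b ->
  count (fun w => (a <= w) && p w) (iota 0 b) = count p (iota a (b - a)).
Proof.
move=> Hab; rewrite -{1}(subnKC Hab) iotaD count_cat add0n.
rewrite (@eq_in_count _ (fun w => (a <= w) && p w) pred0 (iota 0 a)); last first.
  by move=> w; rewrite mem_iota /= => H; rewrite leqNgt H.
rewrite count_pred0 add0n; apply: eq_in_count => w; rewrite mem_iota => /andP[H _].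
by rewrite H.
Qed.

Lemma count_rev_iota (p : pred nat) m :
  count p (iota 0 m.+1) = count (fun u => p (m - u)) (iota 0 m.+1).
Proof.
have -> : count (fun u => p (m - u)) (iota 0 m.+1) =
          count p (map (fun u => m - u) (iota 0 m.+1)) by rewrite count_map.
apply/permP; apply: uniq_perm.
- exact: iota_uniq.
- rewrite map_inj_in_uniq ?iota_uniq // => x y; rewrite !mem_iota; slia.
- move=> x; rewrite mem_iota; apply/idP/mapP.
  + move=> Hx; exists (m - x); rewrite ?mem_iota; slia.
  + case=> y; rewrite mem_iota => Hy ->; slia.
Qed.

Lemma count_lt_nth (s : seq nat) r : sorted ltn s -> r < size s ->
  count (fun j => j < nth 0 s r) s = r.
Proof.
elim: s r => [|a s IH] r //= Hs Hr.
move: Hs; rewrite (path_sortedE ltn_trans) => /andP[Hall Hs].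
case: r Hr => [|r] Hr /=.
- rewrite ltnn add0n; apply/eqP; rewrite -leqn0 leqNgt -has_count; apply/hasP.
  case=> y Hy; move/allP: Hall => /(_ y Hy) /=; slia.
- rewrite IH //; have : a < nth 0 s r by apply: (allP Hall); apply: mem_nth.
  by move=> ->.
Qed.

Lemma sumn_iota a n : 2 * sumn (iota a n) = n * (2 * a + n - 1).
Proof.
elim: n a => [|n IH] a //=.
rewrite mulnDr IH; snia.
Qed.

Lemma last_max (s : seq nat) x0 : path ltn x0 s -> forall y, y \in x0 :: s -> y <= last x0 s.
Proof.
elim: s x0 => [|a s IH] x0 /=; first by move=> _ y; rewrite inE => /eqP ->.
move=> /andP[Ha Hp] y; rewrite inE => /orP[/eqP ->|Hy].
  have := IH a Hp a (mem_head _ _); slia.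
exact: IH.
Qed.
Lemma np_formula (lam : seq nat) len a e :
  north_positions [seq S_of lam j | j <- iota a len] e =
  [seq e + count (fun x => x \notin lam) (iota a (j - a)) | j <- [seq j <- iota a len | j \in lam]].
Proof.
elim: len a e => [|len IH] a e //=.
rewrite /S_of; case Ha: (a \in lam) => /=.
- rewrite IH /=; congr (_ :: _); first by rewrite subnn addn0.
  apply/eq_in_map => j; rewrite mem_filter mem_iota => /andP[_ /andP[Hj _]].
  have -> : j - a = (j - a.+1).+1 by slia.
  by rewrite /= Ha.
- rewrite IH; apply/eq_in_map => j; rewrite mem_filter mem_iota => /andP[_ /andP[Hj _]].
  have -> : j - a = (j - a.+1).+1 by slia.
  by rewrite /= Ha addSnnS.
Qed.

Lemma lam_bounds (lam : seq nat) : sorted ltn lam -> all (fun x => 0 < x) lam ->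
  forall y, y \in lam -> 0 < y <= largest lam.
Proof.
case: lam => [|a s] // Hs Hp y Hy.
rewrite (allP Hp y Hy) /= /largest /=; exact: last_max.
Qed.

Lemma largest_in (lam : seq nat) : lam != [::] -> largest lam \in lam.
Proof. by case: lam => [|a s] //= _; rewrite /largest /= mem_last. Qed.

Lemma KN_eq (lam : seq nat) : sorted ltn lam -> all (fun x => 0 < x) lam ->
  KN (S_of lam) (largest lam) =
  rev (map (fun j => count (fun x => x \notin lam) (iota 0 j)) lam).
Proof.
move=> Hs Hp; rewrite /KN /KN_path np_formula.
have -> : [seq j <- iota 0 (largest lam).+1 | j \in lam] = lam.
  apply: (irr_sorted_eq ltn_trans ltnn).
  - by apply: sorted_filter; [exact: ltn_trans | exact: iota_ltn_sorted].
  - exact: Hs.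
  - move=> y; rewrite mem_filter mem_iota add0n ltnS.
    apply/andP/idP => [[]//|Hy]; split=> //.
    by have /andP[] := lam_bounds Hs Hp Hy.
congr rev; apply/eq_in_map => j _; by rewrite subn0 add0n.
Qed.

Lemma odd_hook (lam : seq nat) : sorted ltn lam -> all (fun x => 0 < x) lam -> lam != [::] ->
  (forall u, u <= largest lam -> (largest lam - u \in lam) = (u \notin lam)) ->
  forall i, 0 < i ->
  hook (KN (S_of lam) (largest lam)) i 1 = hook (KN (S_of lam) (largest lam)) 1 i.
Proof.
move=> Hs Hp Hne Hsym i Hi.
have HY := KN_eq Hs Hp.
set m := largest lam in Hsym HY *.
have Hb : forall y, y \in lam -> 0 < y <= m by exact: lam_bounds.
have Hm : m \in lam by exact: largest_in.
have H0 : 0 \notin lam by apply/negP => /Hb.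
set E := fun j => count (fun x => x \notin lam) (iota 0 j) in HY *.
set R := fun j => count (fun x => x \in lam) (iota 0 j).
have HER : forall j, E j + R j = j.
  by move=> j; rewrite /E /R addnC count_predC size_iota.
have HRs : forall a b, R (a + b) = R a + count (fun x => x \in lam) (iota a b).
  by move=> a b; rewrite /R iotaD count_cat.
have HEs : forall a b, E (a + b) = E a + count (fun x => x \notin lam) (iota a b).
  by move=> a b; rewrite /E iotaD count_cat.
have HEmono : forall a b, a <= b -> E a <= E b.
  by move=> a b Hab; rewrite -(subnKC Hab) HEs leq_addr.
have HRmono : forall a b, a <= b -> R a <= R b.
  by move=> a b Hab; rewrite -(subnKC Hab) HRs leq_addr.
have HRx1 : forall x, x \in lam -> R x.+1 = (R x).+1.
  by move=> x Hx; rewrite -[x.+1]addn1 HRs /= Hx addn0 addn1.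
have Hfil : [seq j <- iota 0 m.+1 | j \in lam] = lam.
  apply: (irr_sorted_eq ltn_trans ltnn) => //.
  - by apply: sorted_filter; [exact: ltn_trans | exact: iota_ltn_sorted].
  - move=> y; rewrite mem_filter mem_iota add0n ltnS.
    apply/andP/idP => [[]//|Hy]; split=> //.
    by have /andP[] := Hb y Hy.
have Hcnt : forall p : pred nat, count p lam = count (fun j => (j \in lam) && p j) (iota 0 m.+1).
  move=> p; rewrite -{1}Hfil count_filter; apply: eq_count => j /=; by rewrite andbC.
have Ht : size lam = R m.+1 by rewrite -{1}Hfil size_filter.
have H2t : (size lam).*2 = m.+1.
  have : R m.+1 = E m.+1.
    rewrite /R /E count_rev_iota; apply: eq_in_count => u; rewrite mem_iota /= => Hu.
    by rewrite Hsym.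
  have := HER m.+1; rewrite -Ht; slia.
have HRle : forall j, j <= m.+1 -> R j <= size lam.
  by move=> j Hj; rewrite Ht; apply: HRmono.
have HRm : R m.+1 = (R m).+1 by apply: HRx1.
have HEm : E m = size lam.
  have := HER m; slia.
have HE1 : forall y, y \in lam -> 0 < E y.
  move=> y Hy; have /andP[Hy0 _] := Hb y Hy; have := HEmono 1 y Hy0.
  by rewrite /E /= H0.
have HEsym : forall z, z <= m -> E (m - z) = size lam - R z.+1.
  move=> z Hz.
  have -> : E (m - z) = count (fun w => (w < m - z) && (w \notin lam)) (iota 0 m.+1).
    by rewrite /E (@count_prefix _ (m - z) m.+1) //; slia.
  rewrite count_rev_iota.
  rewrite (@eq_in_count _ _ (fun u => (z.+1 <= u) && (u \in lam))); last first.
    move=> u; rewrite mem_iota /= => Hu.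
    have -> : (m - u < m - z) = (z.+1 <= u) by slia.
    by rewrite Hsym ?negbK //; slia.
  rewrite count_suffix // Ht.
  have := HRs z.+1 (m.+1 - z.+1); rewrite subnKC //.
  by move=> ->; rewrite addKn.
have [lam' Hl] : exists lam', lam = rcons lam' m.
  move: Hne; rewrite /m; case: (lam) => [|a s] // _.
  by exists (belast a s); rewrite /largest /= -lastI.
have Huniq : uniq lam by apply: (sorted_uniq ltn_trans ltnn).
have Hsz : size lam = (size lam').+1 by rewrite Hl size_rcons.
have HY' : KN (S_of lam) m = E m :: rev (map E lam').
  by rewrite HY -rev_rcons -map_rcons -Hl.
have Hlam' : forall y, y \in lam' -> y < m.
  move=> y Hy; have Hyl : y \in lam by rewrite Hl mem_rcons inE Hy orbT.
  have /andP[_ Hym] := Hb y Hyl.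
  move: Huniq; rewrite Hl rcons_uniq => /andP[Hmn _].
  rewrite ltn_neqAle Hym andbT; apply/eqP => Hye; move: Hmn; by rewrite -Hye Hy.
case: (leqP i (size lam)) => Hit.
- set x := nth 0 lam (size lam - i).
  have Hxi : size lam - i < size lam by slia.
  have Hx : x \in lam by apply: mem_nth.
  have /andP[Hx0 Hxm] := Hb x Hx.
  have HRx : R x = size lam - i.
    have -> : R x = count (fun j => j < x) lam.
      rewrite Hcnt /R (@count_prefix _ x m.+1); last by slia.
      by apply: eq_count => j /=; rewrite andbC.
    by rewrite /x count_lt_nth.
  have HEx1 := HE1 x Hx.
  have HEx := HER x.
  have L : hook (KN (S_of lam) m) i 1 = x.
    rewrite /hook HY nth_rev; last by rewrite size_map; slia.
    rewrite size_map (nth_map 0); last by slia.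
    have -> : size lam - i.-1.+1 = size lam - i by slia.
    rewrite -/x.
    rewrite (@eq_in_count _ _ predT); last first.
      move=> y /mem_drop; rewrite mem_rev => /mapP [z Hz ->] /=; exact: HE1.
    rewrite count_predT size_drop size_rev size_map; slia.
  have Rt : hook (KN (S_of lam) m) 1 i = x.
    rewrite /hook HY' /= drop0 count_rev count_map.
    have Hc : count (preim E (fun r => i <= r)) lam = E x.
      rewrite Hcnt count_rev_iota.
      rewrite (@eq_in_count _ _ (fun u => (u < x) && (u \notin lam))); last first.
        move=> u; rewrite mem_iota /= => Hu.
        rewrite Hsym; last by slia.
        case Hul: (u \in lam); first by rewrite andbF.
        rewrite andbT HEsym; last by slia.
        case: (ltnP u x) => Hux.
        - have := HRmono u.+1 x Hux; have := HRle x; slia.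
        - have Hux' : x < u.
            rewrite ltn_neqAle Hux andbT; apply/eqP => Hxu; move: Hul; by rewrite -Hxu Hx.
          have := HRmono x.+1 u.+1 (ltnW Hux'); rewrite HRx1 //; slia.
      rewrite -count_prefix //; slia.
    move: Hc; rewrite Hl -cats1 count_cat /= HEm.
    rewrite Hit; slia.
  by rewrite L Rt.
- rewrite /hook {1}HY nth_default; last by rewrite size_rev size_map; slia.
  rewrite drop_oversize; last by rewrite HY size_rev size_map; slia.
  rewrite HY' /= drop0 count_rev count_map HEm.
  rewrite (@eq_in_count _ _ pred0); last first.
    move=> y Hy /=; have := HEmono y m (ltnW (Hlam' y Hy)); slia.
  rewrite count_pred0; slia.
Qed.

Lemma noref_pair (lam : seq nat) : ~~ refinable lam ->
  forall a b, a != b -> 0 < a <= largest lam -> 0 < b <= largest lam ->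
  a \notin lam -> b \notin lam -> a + b \notin lam.
Proof.
move=> Hr a b Hab Ha Hb Hal Hbl; apply/negP => Hs.
move/negP: Hr; apply; apply/hasP; exists a.
  by rewrite /missing mem_filter Hal mem_iota; slia.
apply/hasP; exists b; last by rewrite Hab Hs.
by rewrite /missing mem_filter Hbl mem_iota; slia.
Qed.

Lemma pair_struct (lam : seq nat) : sorted ltn lam -> all (fun x => 0 < x) lam ->
  lam != [::] -> ~~ refinable lam -> size (missing lam) = (largest lam)./2 ->
  forall y, 0 < y -> y.*2 <= largest lam -> (y \notin lam) || (largest lam - y \notin lam).
Proof.
move=> Hs Hp Hne Hr Hsz.
set m := largest lam in Hsz *.
move: Hsz.
have Hm : m \in lam by exact: largest_in.
have HM : forall x, x \in missing lam -> [/\ 0 < x, x < m & x \notin lam].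
  move=> x; rewrite /missing mem_filter mem_iota => /andP[Hx Hxr].
  split=> //; try slia.
  rewrite ltn_neqAle; apply/andP; split; last by slia.
  by apply/eqP => Hxm; move: Hx; rewrite Hxm Hm.
set phi := fun x => minn x (m - x).
have Hu : uniq (map phi (missing lam)).
  rewrite map_inj_in_uniq; first by rewrite filter_uniq // iota_uniq.
  move=> x y Hx Hy Hxy.
  have [Hx0 Hxm Hxl] := HM x Hx; have [Hy0 Hym Hyl] := HM y Hy.
  case: (x =P y) => // /eqP Hne'; exfalso.
  have Hsum : x + y = m by move: Hxy; rewrite /phi; slia.
  have H := @noref_pair lam Hr x y Hne'.
  have : x + y \notin lam by apply: H => //; rewrite -/m; slia.
  by rewrite Hsum Hm.
have Hsub : {subset map phi (missing lam) <= iota 1 m./2}.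
  move=> z /mapP [x Hx ->]; have [Hx0 Hxm _] := HM x Hx.
  rewrite mem_iota /phi; slia.
move=> Hsz.
have Hsz2 : size (iota 1 m./2) <= size (map phi (missing lam)).
  by rewrite size_iota size_map Hsz.
clear Hsz.
have [_ Heq] := uniq_min_size Hu Hsub Hsz2.
move=> y Hy0 Hy2.
have : y \in map phi (missing lam) by rewrite Heq mem_iota; slia.
case/mapP => x Hx Hyx; have [Hx0 Hxm Hxl] := HM x Hx.
have [Exy|Exy] : x = y \/ x = m - y by move: Hyx; rewrite /phi; slia.
  by rewrite -Exy Hxl.
by rewrite -Exy Hxl orbT.
Qed.

Lemma odd_sym (lam : seq nat) : sorted ltn lam -> all (fun x => 0 < x) lam ->
  lam != [::] -> ~~ refinable lam -> size (missing lam) = (largest lam)./2 ->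
  odd (largest lam) ->
  forall u, u <= largest lam -> (largest lam - u \in lam) = (u \notin lam).
Proof.
move=> Hs Hp Hne Hr Hsz Hodd.
have Hps := pair_struct Hs Hp Hne Hr Hsz.
clear Hsz.
have Hb : forall y, y \in lam -> 0 < y <= largest lam by exact: lam_bounds.
have Hm : largest lam \in lam by exact: largest_in.
have H0 : 0 \notin lam by apply/negP => /Hb.
move: Hodd Hps Hb Hm H0; set m := largest lam => Hodd Hps Hb Hm H0 u Hu.
have [Eu|Hu0] := posnP u; first by rewrite Eu subn0 Hm; symmetry; exact: H0.
case: (ltngtP u m) => Hum; last first.
- by rewrite Hum subnn Hm; exact/negbTE.
- by move: Hu; rewrite leqNgt Hum.
have H1 : (u \notin lam) || (m - u \notin lam).
  case: (leqP u (m - u)) => Hle.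
  - by apply: Hps => //; slia.
  - have := Hps (m - u) ltac:(slia) ltac:(slia); rewrite orbC.
    by have -> : m - (m - u) = u by slia.
have H2 : ~~ ((u \notin lam) && (m - u \notin lam)).
  apply/negP => /andP[Ha Hb'].
  have Hne' : u != m - u by apply/eqP; move: Hodd; slia.
  have := @noref_pair lam Hr u (m - u) Hne' ltac:(slia) ltac:(slia) Ha Hb'.
  by rewrite -/m subnKC ?Hm // ltnW.
move: H1 H2; case: (u \in lam); case: (m - u \in lam) => //.
Qed.

Lemma sumn_map_split (s : seq nat) (f g1 g2 : nat -> nat) :
  (forall y, y \in s -> f y = g1 y + g2 y) ->
  sumn (map f s) = sumn (map g1 s) + sumn (map g2 s).
Proof.
elim: s => [|a s IH] //= H.
rewrite H ?mem_head // IH; first slia.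
by move=> y Hy; apply: H; rewrite inE Hy orbT.
Qed.

Lemma T2 n : 2 * T n = n * n.+1.
Proof.
rewrite /T -[RHS](@even_halfK (n * n.+1)); first by rewrite -mul2n.
by rewrite oddM /=; case: (odd n).
Qed.

Lemma arith_contra n k q S0 Y T : 0 < k -> 2 * k <= n - 4 -> 2 * n - 5 <= 2 * q ->
  2 * S0 = q.-1 * (2 * 1 + q.-1 - 1) -> 2 * T = n * n.+1 ->
  S0 + 2 * Y + 2 * q = T - (n - 2 * k) -> False.
Proof.
move=> Hk1 Hk2 Hq HS HT Hs.
have [p Hp] : exists p, n = p + 6 by exists (n - 6); lia.
subst n.
have [d Hd] : exists d, q = p + 4 + d by exists (q - (p + 4)); lia.
subst q.
have HS' : 2 * S0 = (p + 3 + d) * (p + 4 + d).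
  rewrite HS; have -> : (p + 4 + d).-1 = p + 3 + d by lia.
  by have -> : 2 * 1 + (p + 3 + d) - 1 = p + 4 + d by lia.
have HT' : 2 * T = (p + 6) * (p + 7) by rewrite HT; have -> : (p + 6).+1 = p + 7 by lia.
have Hs' : 2 * S0 + 4 * Y + 4 * (p + 4 + d) + 2 * p + 12 = 2 * T + 4 * k by lia.
rewrite HS' HT' in Hs'.
have E1 : (p + 3 + d) * (p + 4 + d) = p * p + 7 * p + 12 + 2 * (d * p) + 7 * d + d * d by nia.
have E2 : (p + 6) * (p + 7) = p * p + 13 * p + 42 by nia.
rewrite E1 E2 in Hs'.
case: d Hs' {Hq HS' E1 Hs HS} => [|d] Hs'.
- lia.
- have : d.+1 * p >= p by rewrite mulSn; lia.
  lia.
Qed.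

Lemma even_contra n k (lam : seq nat) : 1 <= k -> 2 * k <= n - 4 ->
  sorted ltn lam -> all (fun x => 0 < x) lam ->
  lam != [::] -> ~~ refinable lam -> size (missing lam) = (largest lam)./2 ->
  ~~ odd (largest lam) -> sumn lam = Tnd n (n - 2 * k) -> 2 * n - 5 <= largest lam -> False.
Proof.
move=> Hk1 Hk2 Hs Hp Hne Hr Hsz Hev Hsum Hbig.
have Hb : forall y, y \in lam -> 0 < y <= largest lam by exact: lam_bounds.
have Hm : largest lam \in lam by exact: largest_in.
have H0 : 0 \notin lam by apply/negP => /Hb.
have Hps := pair_struct Hs Hp Hne Hr Hsz.
clear Hsz.
move: Hsum; move: Hev Hps Hb Hm H0 Hbig; set m := largest lam => Hev Hps Hb Hm H0 Hbig.
have [q Hmq] : exists q, m = 2 * q by exists m./2; rewrite mul2n even_halfK.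
clear Hev.
have Hq3 : 2 <= q by slia.
move: Hk1 Hk2 Hbig.
have Hq : q \notin lam.
  have := Hps q ltac:(slia) ltac:(slia).
  have -> : m - q = q by slia.
  by rewrite orbb.
have E2 : forall y, 0 < y < q -> (m - y \in lam) = (y \notin lam).
  move=> y Hy.
  have H1 := Hps y ltac:(slia) ltac:(slia).
  have H2 : ~~ ((y \notin lam) && (m - y \notin lam)).
    apply/negP => /andP[Ha Hb'].
    have Hne' : y != m - y by apply/eqP; slia.
    have := @noref_pair lam Hr y (m - y) Hne' ltac:(slia) ltac:(slia) Ha Hb'.
    by rewrite -/m subnKC ?Hm //; slia.
  move: H1 H2; case: (y \in lam); case: (m - y \in lam) => //.
have [lam' Hl] : exists lam', lam = rcons lam' m.
  move: Hne; rewrite /m; case: (lam) => [|a s] // _.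
  by exists (belast a s); rewrite /largest /= -lastI.
have Huniq : uniq lam by apply: (sorted_uniq ltn_trans ltnn).
have Hlam' : forall y, y \in lam' = (y \in lam) && (y != m).
  move=> y; move: Huniq; rewrite Hl rcons_uniq mem_rcons inE => /andP[Hmn _].
  case: (y =P m) => [->|/eqP Hym] /=; first by rewrite (negbTE Hmn).
  by rewrite andbT.
set g := fun y => if y \in lam then y else m - y.
have Hperm : perm_eq lam' (map g (iota 1 q.-1)).
  apply: uniq_perm.
  - by move: Huniq; rewrite Hl rcons_uniq => /andP[].
  - rewrite map_inj_in_uniq ?iota_uniq // => x y; rewrite !mem_iota => Hx Hy.
    rewrite /g; case: (x \in lam); case: (y \in lam); slia.
  - move=> z; rewrite Hlam'; apply/idP/mapP.
    + move=> /andP[Hz Hzm]; have /andP[Hz0 Hzm'] := Hb z Hz.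
      case: (ltngtP z q) => Hzq.
      * by exists z; rewrite ?mem_iota /g ?Hz //; slia.
      * exists (m - z); first by rewrite mem_iota; slia.
        rewrite /g.
        have Hmz : (m - z \in lam) = false.
          have := E2 (m - z) ltac:(slia).
          have -> : m - (m - z) = z by slia.
          by rewrite Hz; case: (m - z \in lam).
        rewrite Hmz; slia.
      * by move: Hq; rewrite -Hzq Hz.
    + case=> y; rewrite mem_iota => Hy ->; rewrite /g.
      case Hyl: (y \in lam).
      * by rewrite Hyl; apply/eqP; slia.
      * rewrite E2; last by slia.
        by rewrite Hyl /=; apply/eqP; slia.
have Hsum' : sumn lam = sumn (map g (iota 1 q.-1)) + m.
  by rewrite -(perm_sumn Hperm) {1}Hl sumn_rcons.
have Hsplit : sumn (map g (iota 1 q.-1)) =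
   sumn (iota 1 q.-1) + sumn (map (fun y => 2 * ((q - y) * (y \notin lam))) (iota 1 q.-1)).
  rewrite -{2}(map_id (iota 1 q.-1)); apply: sumn_map_split => y; rewrite mem_iota => Hy.
  rewrite /g; case: (y \in lam) => /=; slia.
have HX : forall s : seq nat, sumn (map (fun y => 2 * ((q - y) * (y \notin lam))) s) =
   2 * sumn (map (fun y => (q - y) * (y \notin lam)) s).
  by elim=> [|a s IH] //=; rewrite IH mulnDr.
have HS0 := sumn_iota 1 q.-1.
have HT := T2 n.
rewrite Hsum' Hsplit HX /Tnd.
move=> Hk1 Hk2 Hbig Hsum.
apply: (arith_contra (Y := sumn (map (fun y => (q - y) * (y \notin lam)) (iota 1 q.-1))) Hk1 Hk2 _ HS0 HT).
  by rewrite -Hmq.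
by rewrite -Hsum Hmq.
Qed.

Lemma sorted_cat_ltn (s1 s2 : seq nat) : sorted ltn s1 -> sorted ltn s2 ->
  (forall x y, x \in s1 -> y \in s2 -> x < y) -> sorted ltn (s1 ++ s2).
Proof.
rewrite !(sorted_pairwise ltn_trans) pairwise_cat => -> -> H.
rewrite !andbT; apply/allrelP => x y; exact: H.
Qed.

Lemma exists_big n k : 1 <= k -> 2 * k <= n - 4 ->
  exists mu, unrefinable (Tnd n (n - 2 * k)) mu /\ 2 * n - 5 <= largest mu.
Proof.
move=> Hk1 Hk2.
have HT := T2 n.
have [HA|HB] : 2 * k = n - 4 \/ 2 * k <= n - 5 by lia.
- exists (iota 1 (n - 2) ++ [:: 2 * n - 5]).
  have Hl : largest (iota 1 (n - 2) ++ [:: 2 * n - 5]) = 2 * n - 5.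
    by rewrite /largest last_cat.
  rewrite Hl; split; last by [].
  apply/andP; split.
  + apply/and4P; split.
    * apply: sorted_cat_ltn => //; first exact: iota_ltn_sorted.
      move=> x y; rewrite mem_iota inE => Hx /eqP ->; lia.
    * rewrite all_cat; apply/andP; split; first by apply/allP => x; rewrite mem_iota; lia.
      rewrite /=; lia.
    * rewrite sumn_cat /= addn0 /Tnd; apply/eqP.
      have := sumn_iota 1 (n - 2).
      have [p Hp] : exists p, n = p + 6 by exists (n - 6); lia.
      subst n.
      have E1 : (p + 6) * (p + 6).+1 = p * p + 13 * p + 42 by nia.
      have E2 : (p + 6 - 2) * (2 * 1 + (p + 6 - 2) - 1) = p * p + 9 * p + 20 by nia.
      rewrite E2 => HS; lia.
    * rewrite size_cat size_iota /=; lia.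
  + rewrite /refinable /missing Hl; apply/hasPn => a; rewrite mem_filter mem_iota => /andP[Ha Har].
    apply/hasPn => b; rewrite mem_filter mem_iota => /andP[Hb Hbr].
    apply/negP => /andP[Hab Hs].
    move: Ha Hb Hs; rewrite !mem_cat !mem_iota !inE; lia.
- have [a Ha] : exists a, n = a + k + 4 by exists (n - k - 4); lia.
  subst n.
  case: k Hk1 Hk2 HB HT => [|k] // _ Hk2 HB HT.
  set q := a + k.+1 + 1.
  exists (iota 1 a ++ iota (a + 2) k ++ [:: q + 1; q + 1 + k.+1; 2 * q + 1]).
  have Hl : largest (iota 1 a ++ iota (a + 2) k ++ [:: q + 1; q + 1 + k.+1; 2 * q + 1]) = 2 * q + 1.
    by rewrite /largest !last_cat.
  rewrite Hl; split; last by rewrite /q; lia.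
  apply/andP; split.
  + apply/and4P; split.
    * apply: sorted_cat_ltn; first exact: iota_ltn_sorted.
        apply: sorted_cat_ltn; first exact: iota_ltn_sorted.
          rewrite /= /q; apply/and3P; split=> //; lia.
        move=> x y; rewrite mem_iota !inE /q; lia.
      move=> x y; rewrite mem_iota mem_cat mem_iota !inE /q; lia.
    * rewrite !all_cat; apply/and3P; split.
      - by apply/allP => x; rewrite mem_iota; lia.
      - by apply/allP => x; rewrite mem_iota; lia.
      - rewrite /= /q; lia.
    * rewrite !sumn_cat /= addn0 /Tnd; apply/eqP.
      have H1 := sumn_iota 1 a.
      have H2 := sumn_iota (a + 2) k.
      rewrite /q.
      have E1 : (a + k.+1 + 4) * (a + k.+1 + 4).+1 =
         a * a + 2 * (a * k) + k * k + 11 * a + 11 * k + 30 by nia.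
      have E2 : a * (2 * 1 + a - 1) = a * a + a by nia.
      have E3 : k * (2 * (a + 2) + k - 1) = 2 * (a * k) + k * k + 3 * k by nia.
      rewrite E1 in HT; rewrite E2 in H1; rewrite E3 in H2; lia.
    * rewrite !size_cat size_iota /=; lia.
  + rewrite /refinable /missing Hl; apply/hasPn => x; rewrite mem_filter mem_iota => /andP[Hx Hxr].
    apply/hasPn => y; rewrite mem_filter mem_iota => /andP[Hy Hyr].
    apply/negP => /andP[Hxy Hs].
    move: Hx Hy Hs; rewrite !mem_cat !mem_iota !inE /q; lia.
Qed.

Theorem lemma4p3 (n k : nat) (lam : seq nat) :
  2 <= 2 * k -> 2 * k <= n - 4 ->
  Ubar (Tnd n (n - 2 * k)) lam ->
  forall i : nat, 1 <= i <= n - 2 ->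
    hook (KN (S_of lam) (largest lam)) i 1 =
    hook (KN (S_of lam) (largest lam)) 1 i.
Proof.
move=> Hk1 Hk2 [[Hun Hmax] Hsz] i /andP[Hi _].
move: (Hun) => /andP[/and4P[Hs Hp /eqP Hsum Hsize] Hr].
have Hne : lam != [::] by apply/eqP => E; rewrite E in Hsize.
have Hk : 1 <= k by lia.
have [mu [Hmu Hbig]] := exists_big Hk Hk2.
have Hbig' := leq_trans Hbig (Hmax mu Hmu).
case Hodd: (odd (largest lam)).
- apply: odd_hook => //; exact: odd_sym.
- exfalso; apply: (even_contra Hk Hk2 Hs Hp Hne Hr Hsz _ Hsum Hbig'); by rewrite Hodd.
Qed.
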